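(* Let $\mathcal A$ be an associative unital $*$-algebra over $\mathbb C$, let $\Omega^1$ be an $\mathcal A$-bimodule, and let $d:\mathcal A\to\Omega^1$ be a $\mathbb C$-linear derivation, i.e. $d(fg)=f\,dg+df\,g$ for all $f,g\in\mathcal A$. Let $\overline{\Omega^1}$ be the complex-conjugate vector space, made into an $\mathcal A$-bimodule by $f\cdot\overline{\beta}\cdot g:=\overline{g^*\beta f^*}$, and let $d^\dagger:\mathcal A\to\overline{\Omega^1}$ be defined by $d^\dagger(f):=-\overline{d(f^* )}$ (this is again a derivation). Let $\omega:\Omega^1\otimes_{\mathbb C}\overline{\Omega^1}\to\mathbb C$ be a linear map satisfying $\omega\big((f\alpha g)\otimes\alpha'\big)=\omega\big(\alpha\otimes(g\alpha' f)\big)$ for all $\alpha\in\Omega^1$, $\alpha'\in\overline{\Omega^1}$, $f,g\in\mathcal A$. Define $\Psi(f\otimes g):=\omega(df\otimes d^\dagger g)-\omega(dg\otimes d^\dagger f)$ for $f,g\in\mathcal A$. Then for all $f_0,f_1,f_2\in\mathcal A$, $$\Psi(f_0f_1\otimes f_2)+\Psi(f_1f_2\otimes f_0)+\Psi(f_2f_0\otimes f_1)=0,$$ i.e. $\Psi$ is a cyclic $2$-cocycle on $\mathcal A$.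
   Context: Complex conjugate space: $\overline{V}$ is $V$ with conjugated scalar multiplication, elements written $\overline{v}$. *)

(* Defs.v *)
(* The complex numbers are modelled as R[i] for an
   arbitrary R : realType (every realType is a complete archimedean ordered
   field, i.e. a copy of the reals), with complex conjugation x^*. *)
From HB Require Import structures.
From mathcomp Require Import all_boot all_order all_algebra.
From mathcomp Require Import reals.
From mathcomp Require Export complex.
Set Implicit Arguments. Unset Strict Implicit. Unset Printing Implicit Defensive.
Import Order.TTheory GRing.Theory Num.Theory.
Local Open Scope ring_scope.

Section Defs.
Variable R : realType.
Local Notation C := R[i].

Definition is_star (A : algType C) (star : A -> A) : Prop :=
  [/\ (forall a b, star (a + b) = star a + star b),
      (forall (c : C) a, star (c *: a) = c^* *: star a),
      (forall a b, star (a * b) = star b * star a),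
      star 1 = 1 &
      (forall a, star (star a) = a)].

Definition is_bimodule (A : algType C) (Om : lmodType C)
  (lact : A -> Om -> Om) (ract : Om -> A -> Om) : Prop :=
  (forall f g b, lact (f + g) b = lact f b + lact g b) /\
  (forall f b b', lact f (b + b') = lact f b + lact f b') /\
  (forall (c : C) f b, lact (c *: f) b = c *: lact f b) /\
  (forall (c : C) f b, lact f (c *: b) = c *: lact f b) /\
  (forall f g b, lact (f * g) b = lact f (lact g b)) /\
  (forall b, lact 1 b = b) /\
  (forall f g b, ract b (f + g) = ract b f + ract b g) /\
  (forall f b b', ract (b + b') f = ract b f + ract b' f) /\
  (forall (c : C) f b, ract b (c *: f) = c *: ract b f) /\
  (forall (c : C) f b, ract (c *: b) f = c *: ract b f) /\
  (forall f g b, ract b (f * g) = ract (ract b f) g) /\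
  (forall b, ract b 1 = b) /\
  (forall f g b, lact f (ract b g) = ract (lact f b) g).

(* d is a derivation (Leibniz rule); C-linearity is imposed via {linear _}. *)
Definition is_derivation (A : algType C) (Om : lmodType C)
  (lact : A -> Om -> Om) (ract : Om -> A -> Om) (d : A -> Om) : Prop :=
  forall f g, d (f * g) = lact f (d g) + ract (d f) g.

(* The conjugate space \bar{Om}: its elements \bar{b} are represented by
   b : Om itself (the carrier of \bar{Om} is that of Om), with the
   conjugated scalar multiplication c . \bar b = \bar{c^* b}.
   Bimodule structure: f . \bar b . g := \bar{ g^* b f^* }. *)
Definition conj_lact (A : algType C) (Om : lmodType C) (star : A -> A)
  (lact : A -> Om -> Om) (ract : Om -> A -> Om) (f : A) (b : Om) : Om :=
  ract b (star f).
Definition conj_ract (A : algType C) (Om : lmodType C) (star : A -> A)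
  (lact : A -> Om -> Om) (ract : Om -> A -> Om) (b : Om) (g : A) : Om :=
  lact (star g) b.

(* d^dagger f := - \bar{ d (star f) }, represented in the carrier of Om. *)
Definition dagger (A : algType C) (Om : lmodType C) (star : A -> A)
  (d : A -> Om) (f : A) : Om := - d (star f).

(* A linear map omega : Om (x)_C \bar{Om} -> C is the same as a C-bilinear
   map Om x \bar{Om} -> C; in terms of the carrier of Om, omega a b is
   C-linear in a and C-linear in \bar b, i.e. conjugate-linear in b. *)
Definition is_bilinear_conj (Om : lmodType C) (omega : Om -> Om -> C) : Prop :=
  [/\ (forall a a' b, omega (a + a') b = omega a b + omega a' b),
      (forall (c : C) a b, omega (c *: a) b = c * omega a b),
      (forall a b b', omega a (b + b') = omega a b + omega a b') &
      (forall (c : C) a b, omega a (c *: b) = c^* * omega a b)].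

Definition Psi (A : algType C) (Om : lmodType C) (star : A -> A)
  (d : A -> Om) (omega : Om -> Om -> C) (f g : A) : C :=
  omega (d f) (dagger star d g) - omega (d g) (dagger star d f).

End Defs.

(* Main.v *)
Require Import Defs.
From HB Require Import structures.
From mathcomp Require Import all_boot all_order all_algebra.
From mathcomp Require Import reals complex.
From mathcomp Require Import ring.
Import GRing.Theory Num.Theory.
Local Open Scope ring_scope.

Lemma aux (K : comRingType) (x1 x2 x3 x4 x5 x6 : K) :
  - x1 - x2 - - (x3 + x4) + (- x3 - x5 - - (x6 + x2)) +
  (- x6 - x4 - - (x1 + x5)) = 0.
Proof. ring. Qed.

Theorem mainTheorem1 (R : realType) (A : algType R[i]) (star : A -> A)
  (Om : lmodType R[i]) (lact : A -> Om -> Om) (ract : Om -> A -> Om)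
  (d : {linear A -> Om}) (omega : Om -> Om -> R[i]) :
  is_star star ->
  is_bimodule lact ract ->
  is_derivation lact ract d ->
  is_bilinear_conj omega ->
  (forall (alpha alpha' : Om) (f g : A),
     omega (lact f (ract alpha g)) alpha' =
     omega alpha (conj_ract star lact ract (conj_lact star lact ract g alpha') f)) ->
  forall f0 f1 f2 : A,
    Psi star d omega (f0 * f1) f2 + Psi star d omega (f1 * f2) f0
      + Psi star d omega (f2 * f0) f1 = 0.
Proof.
move=> [_ _ sM s1 _] [_ [_ [_ [_ [_ [l1 [_ [_ [_ [_ [_ [r1 _]]]]]]]]]]]] hd
  [oDl _ oDr _] H f0 f1 f2.
have o0 : forall a, omega a 0 = 0.
  by move=> a; apply/(addrI (omega a 0)); rewrite -oDr !addr0.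
have oN : forall a b, omega a (- b) = - omega a b.
  by move=> a b; apply/(addrI (omega a b)); rewrite -oDr !subrr o0.
have hl : forall f a b, omega (lact f a) b = omega a (lact (star f) b).
  move=> f a b; have := H a b f 1; rewrite r1 /conj_ract /conj_lact s1.
  by rewrite r1 => ->.
have hr : forall g a b, omega (ract a g) b = omega a (ract b (star g)).
  move=> g a b; have := H a b 1 g; rewrite l1 /conj_ract /conj_lact s1 => ->.
  rewrite l1. done.
rewrite /Psi /dagger !sM !hd !oDl !oN !oDr !hl !hr.
set x1 := omega (d f1) (lact (star f0) (d (star f2))).
set x2 := omega (d f0) (ract (d (star f2)) (star f1)).
set x3 := omega (d f2) (lact (star f1) (d (star f0))).
set x4 := omega (d f2) (ract (d (star f1)) (star f0)).
set x5 := omega (d f1) (ract (d (star f0)) (star f2)).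
set x6 := omega (d f0) (lact (star f2) (d (star f1))).
clearbody x1 x2 x3 x4 x5 x6.
exact: aux.
Qed.
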